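(* Let $\mathcal{X}\subseteq\mathbb{R}^d$ be closed and convex, $\mu,\sigma,\epsilon,\delta>0$. Let $h:\mathcal{X}\to\mathbb{R}$ be continuously differentiable with $D_h(x,y)\ge\frac\sigma2\|x-y\|^2$ for all $x,y$, and let $f:\mathcal{X}\to\mathbb{R}$ be differentiable with $(1/\epsilon)$-Lipschitz gradient, $\mu$-uniformly convex with respect to $h$ (i.e. $D_f(x,y)\ge\mu D_h(x,y)$ for all $x,y$), with minimizer $x^\ast$. Let $(A_k)_{k\ge0}$ be a nondecreasing sequence of positive numbers, $\alpha_k=A_{k+1}-A_k$, $\tau_k=\alpha_k/A_{k+1}$, and $E_k=A_k\big(\mu D_h(x^\ast,z_k)+f(y_k)-f(x^\ast)\big)$. Suppose sequences $(x_k),(y_k),(z_k)$ in $\mathcal{X}$ satisfy, for all $k$, $$x_k=\frac{\tau_k}{1+\tau_k}z_k+\frac1{1+\tau_k}y_k,\qquad \nabla h(z_{k+1})-\nabla h(z_k)=\tau_k\Big(\nabla h(x_k)-\nabla h(z_k)-\frac1\mu\nabla f(x_k)\Big),$$ with $y_{k+1}\in\mathcal{X}$ arbitrary. Then $\frac{E_{k+1}-E_k}{\delta}\le\varepsilon_{k+1}$, where $$\varepsilon_{k+1}=\frac{A_{k+1}}{\delta}\big(f(y_{k+1})-f(x_k)\big)+\frac{A_{k+1}}{\delta}\Big(\frac{\tau_k}{2\epsilon}-\frac{\sigma\mu}{2\tau_k}\Big)\|x_k-y_k\|^2-\frac{A_{k+1}\mu\sigma}{2\delta}\|x_k-y_k\|^2+\frac{\alpha_k}{\delta}\langle\nabla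 f(x_k),y_k-x_k\rangle+\frac{A_{k+1}\mu}{2\sigma\delta}\Big\|\tau_k\Big(\nabla h(x_k)-\nabla h(z_k)-\frac1\mu\nabla f(x_k)\Big)\Big\|^2.$$ When $\mathcal{X}=\mathbb{R}^d$ and $h=\frac12\|\cdot\|^2$, this becomes $$\varepsilon_{k+1}=\frac{A_{k+1}}{\delta}\Big(f(y_{k+1})-f(x_k)+\frac{\tau_k^2}{2\mu}\|\nabla f(x_k)\|^2+\Big(\frac{\tau_k}{2\epsilon}-\frac{\mu}{2\tau_k}\Big)\|x_k-y_k\|^2\Big).$$
   Context: $\|\cdot\|$ is the Euclidean norm; for differentiable $g$, $D_g(y,x)=g(y)-g(x)-\langle\nabla g(x),y-x\rangle$. *)

(* Defs.v *)
From HB Require Import structures.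
From mathcomp Require Import all_boot all_order all_algebra.
From mathcomp Require Import all_classical all_reals all_analysis.
Set Implicit Arguments. Unset Strict Implicit. Unset Printing Implicit Defensive.
Import Order.TTheory GRing.Theory Num.Theory.
Import numFieldNormedType.Exports.
Local Open Scope ring_scope.
Local Open Scope classical_set_scope.

Section Defs.
Variables (R : realType) (d : nat).

Definition dotp (u v : 'rV[R]_d) : R := \sum_(i < d) u ord0 i * v ord0 i.
Definition enorm (u : 'rV[R]_d) : R := Num.sqrt (dotp u u).

Definition has_grad (f : 'rV[R]_d -> R) (g : 'rV[R]_d -> 'rV[R]_d)
  (x : 'rV[R]_d) : Prop :=
  differentiable f x /\ forall v, 'd f x v = dotp (g x) v.

Definition bregman (f : 'rV[R]_d -> R) (g : 'rV[R]_d -> 'rV[R]_d)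
  (y x : 'rV[R]_d) : R := f y - f x - dotp (g x) (y - x).

End Defs.

(* Main.v *)
Require Import Defs.
From HB Require Import structures.
From mathcomp Require Import all_boot all_order all_algebra.
From mathcomp Require Import all_classical all_reals all_analysis.
From mathcomp Require Import ring lra.
Import Order.TTheory GRing.Theory Num.Theory.
Import numFieldNormedType.Exports.
Local Open Scope ring_scope.
Local Open Scope classical_set_scope.

Set Implicit Arguments. Unset Strict Implicit.

Section H.
Variables (R : realType) (d : nat).
Implicit Types u v w a b : 'rV[R]_d.

Lemma dotpDl u v w : dotp (u + v) w = dotp u w + dotp v w.
Proof. by rewrite /dotp -big_split; apply: eq_bigr => i _; rewrite mxE mulrDl. Qed.
Lemma dotpZl (c : R) u w : dotp (c *: u) w = c * dotp u w.
Proof. by rewrite /dotp mulr_sumr; apply: eq_bigr => i _; rewrite mxE mulrA. Qed.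
Lemma dotpNl u w : dotp (- u) w = - dotp u w.
Proof. by rewrite /dotp -sumrN; apply: eq_bigr => i _; rewrite mxE mulNr. Qed.
Lemma dotpC u w : dotp u w = dotp w u.
Proof. by apply: eq_bigr => i _; rewrite mulrC. Qed.
Lemma dotpDr u v w : dotp w (u + v) = dotp w u + dotp w v.
Proof. by rewrite dotpC dotpDl !(dotpC w). Qed.
Lemma dotpZr (c : R) u w : dotp w (c *: u) = c * dotp w u.
Proof. by rewrite dotpC dotpZl (dotpC w). Qed.
Lemma dotpNr u w : dotp w (- u) = - dotp w u.
Proof. by rewrite dotpC dotpNl (dotpC w). Qed.
Lemma dotp_ge0 u : 0 <= dotp u u.
Proof. by apply: sumr_ge0 => i _; rewrite -expr2 sqr_ge0. Qed.
Lemma enorm_sq u : enorm u ^+ 2 = dotp u u.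
Proof. by rewrite /enorm sqr_sqrtr // dotp_ge0. Qed.
Lemma dotp_eq0 u : dotp u u = 0 -> u = 0.
Proof.
move=> h; apply/rowP => j; rewrite mxE.
have H := @psumr_eq0P R _ predT (fun i => u ord0 i * u ord0 i).
have /eqP := H (fun i _ => ltac:(by rewrite -expr2 sqr_ge0)) h j isT.
by rewrite mulf_eq0 orbb => /eqP; rewrite (ord1 (ord0 : 'I_1)).
Qed.

Definition dE := (dotpDl, dotpDr, dotpNl, dotpNr, dotpZl, dotpZr).

Lemma enormB_sym u v : enorm (u - v) = enorm (v - u).
Proof. by rewrite /enorm -opprB dotpNl dotpNr opprK. Qed.

Lemma young a b (s : R) : 2 * s * dotp a b <= dotp a a + s ^+ 2 * dotp b b.
Proof.
have := dotp_ge0 (a - s *: b); rewrite !dE (dotpC b a); lra.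
Qed.

Lemma bregman_sum (f : 'rV[R]_d -> R) g u v :
  bregman f g u v + bregman f g v u = dotp (g u - g v) (u - v).
Proof. rewrite /bregman !dE (dotpC (g u) v); lra. Qed.
End H.

Lemma core (R : realType) (A1 t mu s e' w n m p q L I1 J1 J2 K1 K2 K3 Bxz1 Bxz Bz1z Bxsx Bxz2 Bzx Byx fy1 fx fy fs : R) :
 0 < A1 -> 0 <= t -> t <= 1 -> 0 < mu -> 0 < s ->
 Bxz1 - Bxz + Bz1z = - t * I1 + L ->
 Bxz = Bxsx + Bxz2 + J1 ->
 Bxz2 + Bzx = J2 ->
 I1 = J1 + J2 - mu^-1 * (K1 + K2) ->
 t * K2 = K3 ->
 mu * Bxsx <= fs - fx - K1 ->
 mu * Byx <= fy - fx - K3 ->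
 s / 2 * n <= Byx ->
 s / 2 * m <= Bzx ->
 s / 2 * p <= Bz1z ->
 2 * s * L <= q + s ^+ 2 * p ->
 mu * s * n <= e' * n ->
 w * n = t * mu * s / 2 * m ->
 A1 * mu * Bxz1 + A1 * (fy1 - fs) - A1 * (1 - t) * (mu * Bxz + fy - fs)
   <= A1 * (fy1 - fx) + A1 * t * e' / 2 * n - A1 * w * n - A1 * mu * s / 2 * n
      + A1 * t * K3 + A1 * mu / (2 * s) * q.
Proof.
move=> A0 t0 t1 m0 s0 E1 E2 E3 E4 E5 C1 C2 C3 C4 C5 C6 C7 C8.
have E4' : mu * I1 = mu * J1 + mu * J2 - (K1 + K2).
  by rewrite E4 mulrBr mulrA mulfV ?gt_eqF // mul1r mulrDr.
have hL : L <= q / (2 * s) + s / 2 * p.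
  have -> : q / (2 * s) + s / 2 * p = (q + s ^+ 2 * p) / (2 * s).
    by field; rewrite gt_eqF.
  rewrite ler_pdivlMr ?mulr_gt0 //; lra.
have At : 0 <= A1 * t by rewrite mulr_ge0 // ltW.
have At1 : 0 <= A1 * (1 - t) by rewrite mulr_ge0 ?subr_ge0 // ltW.
have Am : 0 <= A1 * mu by rewrite mulr_ge0 // ltW.
have Atm : 0 <= A1 * t * mu by rewrite mulr_ge0 // ltW.
have At2 : 0 <= A1 * t / 2 by rewrite mulr_ge0.
have P1 := congr1 (fun v => A1 * mu * v) E1.
have P2 := congr1 (fun v => A1 * t * v) E4'.
have P3 := congr1 (fun v => A1 * t * mu * v) E2.
have P4 := congr1 (fun v => A1 * t * mu * v) E3.
have P5 := congr1 (fun v => A1 * v) E5.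
have P6 := ler_wpM2l At C1.
have P7 := ler_wpM2l At1 C2.
have P7b := ler_wpM2l (mulr_ge0 At1 (ltW m0)) C3.
have P8 := ler_wpM2l Atm C4.
have P9 := ler_wpM2l Am C5.
have P10 := ler_wpM2l Am hL.
have P11 := congr1 (fun v => A1 * v) C8.
have P12 := ler_wpM2l At2 C7.
simpl in *.
lra.
Qed.

Section V.
Variables (R : realType) (d : nat).
Implicit Types u v w a b g xs x y z zz : 'rV[R]_d.

Lemma three_point (h : 'rV[R]_d -> R) gh xs z (z1 : 'rV[R]_d) g (t : R) :
  gh z1 = gh z + t *: g ->
  bregman h gh xs z1 - bregman h gh xs z + bregman h gh z1 z
   = - t * dotp g (xs - z) + dotp (t *: g) (z1 - z).
Proof. move=> e; rewrite /bregman e !dE; ring. Qed.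

Lemma breg_split (h : 'rV[R]_d -> R) gh xs x z :
  bregman h gh xs z = bregman h gh xs x + bregman h gh x z
     + dotp (gh x - gh z) (xs - x).
Proof. rewrite /bregman !dE; ring. Qed.

Lemma xrel x y z (t : R) : 0 <= t ->
  x = (t / (1 + t)) *: z + (1 + t)^-1 *: y -> y - x = t *: (x - z).
Proof.
move=> t0 ->; apply/rowP => j; rewrite !mxE; move: (y 0 j) (z 0 j) => a b; field.
have h1 : 0 < 1 + t by lra.
by rewrite gt_eqF.
Qed.

Lemma smooth (f h : 'rV[R]_d -> R) gf gh u v (mu sigma L : R) :
  0 < L -> 0 < mu ->
  mu * bregman h gh u v <= bregman f gf u v ->
  mu * bregman h gh v u <= bregman f gf v u ->
  sigma / 2 * enorm (u - v) ^+ 2 <= bregman h gh u v ->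
  sigma / 2 * enorm (v - u) ^+ 2 <= bregman h gh v u ->
  enorm (gf u - gf v) <= L * enorm (u - v) ->
  mu * sigma * enorm (u - v) ^+ 2 <= L * enorm (u - v) ^+ 2.
Proof.
move=> L0 m0 c1 c2 c3 c4 lip.
have S := bregman_sum f gf u v.
rewrite (enormB_sym v u) in c4.
have c3' := ler_wpM2l (ltW m0) c3.
have c4' := ler_wpM2l (ltW m0) c4.
have sq : enorm (gf u - gf v) ^+ 2 <= L ^+ 2 * enorm (u - v) ^+ 2.
  rewrite -exprMn !expr2; apply: ler_pM => //; exact: sqrtr_ge0.
rewrite !enorm_sq in sq c3' c4' *.
have Y := young (gf u - gf v) (u - v) L.
nra.
Qed.

Lemma grad_id (h : 'rV[R]_d -> R) gh :
  (forall u v, 1 / 2 * enorm (u - v) ^+ 2 <= bregman h gh u v) ->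
  (forall u, h u = enorm u ^+ 2 / 2) -> forall v, gh v = v.
Proof.
move=> hb hh v; apply/subr0_eq/dotp_eq0/le_anti; rewrite dotp_ge0 andbT.
have := hb (gh v) v; rewrite /bregman !hh !enorm_sq !dE (dotpC v (gh v)); lra.
Qed.
End V.

Unset Implicit Arguments. Set Strict Implicit.

Theorem proposition7 (R : realType) (d : nat) (X : set 'rV[R]_d)
  (mu sigma eps delta : R)
  (h f : 'rV[R]_d -> R) (gh gf : 'rV[R]_d -> 'rV[R]_d) (xstar : 'rV[R]_d)
  (A : nat -> R) (x y z : nat -> 'rV[R]_d) :
  closed X -> convex_set X ->
  0 < mu -> 0 < sigma -> 0 < eps -> 0 < delta ->
  (* h continuously differentiable on X, sigma-strongly convex (Bregman) *)
  (forall u, X u -> has_grad h gh u) -> {within X, continuous gh} ->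
  (forall u v, X u -> X v ->
     bregman h gh u v >= sigma / 2 * enorm (u - v) ^+ 2) ->
  (* f differentiable on X with (1/eps)-Lipschitz gradient *)
  (forall u, X u -> has_grad f gf u) ->
  (forall u v, X u -> X v -> enorm (gf u - gf v) <= eps^-1 * enorm (u - v)) ->
  (* f is mu-uniformly convex w.r.t. h *)
  (forall u v, X u -> X v -> bregman f gf u v >= mu * bregman h gh u v) ->
  (* xstar is a minimizer of f on X *)
  X xstar -> (forall u, X u -> f xstar <= f u) ->
  (* (A_k) positive, nondecreasing *)
  (forall k, 0 < A k) -> (forall k, A k <= A k.+1) ->
  (forall k, X (x k)) -> (forall k, X (y k)) -> (forall k, X (z k)) ->
  let alpha k := A k.+1 - A k in
  let tau k := alpha k / A k.+1 in
  let E k := A k * (mu * bregman h gh xstar (z k) + f (y k) - f xstar) in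
  (forall k, x k = (tau k / (1 + tau k)) *: z k + (1 + tau k)^-1 *: y k) ->
  (forall k, gh (z k.+1) - gh (z k) =
     tau k *: (gh (x k) - gh (z k) - mu^-1 *: gf (x k))) ->
  let epsk k := (* epsilon_{k+1} *)
    A k.+1 / delta * (f (y k.+1) - f (x k))
    + A k.+1 / delta * (tau k / (2 * eps) - sigma * mu / (2 * tau k))
        * enorm (x k - y k) ^+ 2
    - A k.+1 * mu * sigma / (2 * delta) * enorm (x k - y k) ^+ 2
    + alpha k / delta * dotp (gf (x k)) (y k - x k)
    + A k.+1 * mu / (2 * sigma * delta)
        * enorm (tau k *: (gh (x k) - gh (z k) - mu^-1 *: gf (x k))) ^+ 2 in
  (forall k, (E k.+1 - E k) / delta <= epsk k) /\
  (* special case X = R^d, h = 1/2 ||.||^2 (so sigma = 1) *)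
  (X = setT -> (forall u, h u = enorm u ^+ 2 / 2) -> sigma = 1 ->
   forall k, epsk k =
     A k.+1 / delta * (f (y k.+1) - f (x k)
       + tau k ^+ 2 / (2 * mu) * enorm (gf (x k)) ^+ 2
       + (tau k / (2 * eps) - mu / (2 * tau k)) * enorm (x k - y k) ^+ 2)).
Proof.
move=> hcl hcv m0 s0 e0 d0 hgh hcont hbh hgf hlip hunif hxs hmin Apos Anondec
  hX hY hZ alpha tau E hx hz epsk.
have htau k : A k.+1 * tau k = alpha k.
  by rewrite /tau mulrC divfK // gt_eqF.
have t0 k : 0 <= tau k.
  by rewrite /tau /alpha divr_ge0 ?subr_ge0 // ltW.
have hyx k : y k - x k = tau k *: (x k - z k) by apply: xrel (hx k).
split.
- move=> k.
  have t1 : tau k <= 1.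
    rewrite /tau ler_pdivrMr // mul1r /alpha; have := Apos k; lra.
  have hA0 : A k = A k.+1 * (1 - tau k).
    rewrite mulrBr mulr1 htau /alpha; ring.
  have hz1 : gh (z k.+1) = gh (z k) + tau k *: (gh (x k) - gh (z k) - mu^-1 *: gf (x k)).
    by rewrite -hz addrC subrK.
  rewrite ler_pdivrMr //.
  have eqL : E k.+1 - E k = A k.+1 * mu * bregman h gh xstar (z k.+1)
      + A k.+1 * (f (y k.+1) - f xstar)
      - A k.+1 * (1 - tau k) * (mu * bregman h gh xstar (z k) + f (y k) - f xstar).
    by rewrite /E hA0; ring.
  have eqR : epsk k * delta = A k.+1 * (f (y k.+1) - f (x k))
      + A k.+1 * tau k * eps^-1 / 2 * enorm (x k - y k) ^+ 2
      - A k.+1 * (sigma * mu / (2 * tau k)) * enorm (x k - y k) ^+ 2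
      - A k.+1 * mu * sigma / 2 * enorm (x k - y k) ^+ 2
      + A k.+1 * tau k * dotp (gf (x k)) (y k - x k)
      + A k.+1 * mu / (2 * sigma) * enorm (tau k *: (gh (x k) - gh (z k) - mu^-1 *: gf (x k))) ^+ 2.
    rewrite /epsk -htau; move: (sigma * mu / (2 * tau k)) => w.
    by field; rewrite !gt_eqF.
  rewrite eqL eqR.
  set g := gh (x k) - gh (z k) - mu^-1 *: gf (x k).
  apply: (@core R (A k.+1) (tau k) mu sigma eps^-1 (sigma * mu / (2 * tau k))
     (enorm (x k - y k) ^+ 2) (dotp (x k - z k) (x k - z k))
     (dotp (z k.+1 - z k) (z k.+1 - z k))
     (enorm (tau k *: g) ^+ 2)
     (dotp (tau k *: g) (z k.+1 - z k))
     (dotp g (xstar - z k))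
     (dotp (gh (x k) - gh (z k)) (xstar - x k))
     (dotp (gh (x k) - gh (z k)) (x k - z k))
     (dotp (gf (x k)) (xstar - x k))
     (dotp (gf (x k)) (x k - z k))
     (dotp (gf (x k)) (y k - x k))
     _ _ (bregman h gh (z k.+1) (z k)) (bregman h gh xstar (x k))
     (bregman h gh (x k) (z k)) (bregman h gh (z k) (x k))
     (bregman h gh (y k) (x k))).
  - exact: Apos.
  - exact: t0.
  - exact: t1.
  - exact: m0.
  - exact: s0.
  - exact: three_point.
  - exact: breg_split.
  - exact: bregman_sum.
  - rewrite /g !dE; ring.
  - by rewrite -dotpZr -hyx.
  - exact: hunif.
  - exact: hunif.
  - by rewrite enormB_sym; apply: hbh.
  - by rewrite -enorm_sq enormB_sym; apply: hbh.
  - by rewrite -enorm_sq; apply: hbh.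
  - by rewrite enorm_sq; apply: young.
  - apply: (smooth (f := f) (h := h) (gf := gf) (gh := gh)) => //; try exact: hunif; try exact: hbh; try exact: hlip.
    by rewrite invr_gt0.
  - have -> : enorm (x k - y k) ^+ 2 = tau k ^+ 2 * dotp (x k - z k) (x k - z k).
      by rewrite enorm_sq -opprB hyx dotpNl dotpNr opprK !dE; ring.
    have [->|tn0] := eqVneq (tau k) 0; first by rewrite !(mul0r, mulr0, expr0n, invr0).
    by field; rewrite tn0.
- move=> XT hh s1 k.
  have hb u v : 1 / 2 * enorm (u - v) ^+ 2 <= bregman h gh u v.
    by rewrite -{1}s1; apply: hbh; rewrite XT.
  have gid := grad_id hb hh.
  have hn : enorm (x k - y k) ^+ 2 = tau k ^+ 2 * dotp (x k - z k) (x k - z k).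
    by rewrite enorm_sq -opprB hyx dotpNl dotpNr opprK !dE; ring.
  rewrite /epsk !gid s1 !mul1r -htau hn hyx !enorm_sq.
  move: (mu / (2 * tau k)) => w.
  move: (x k - z k) => a.
  rewrite !dE (dotpC (gf (x k)) a).
  by field; rewrite !gt_eqF.
Qed.
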